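(* There exist pairs of measurement channels corresponding to non-commuting $2$-outcome POVMs $M=\{M_0,M_1\}$, $N=\{N_0,N_1\}$ that form a Maximal Entanglement Worst Case pair. For instance, $M_0=\begin{pmatrix}\tfrac{1}{10}&0\\0&\tfrac15\end{pmatrix}$, $M_1=I-M_0$, and $N_0=\begin{pmatrix}\tfrac{3}{10}&\sqrt{\tfrac1{10}}\\\sqrt{\tfrac1{10}}&\tfrac7{10}\end{pmatrix}$, $N_1=I-N_0$, give a MEWC pair (here $M_0-N_0$ has eigenvalues $-\tfrac7{10}$ and $0$, so it is rank one).
   Context: The measurement channel of a POVM $M$ is $\Phi_M(\rho)=\sum_i\operatorname{Tr}(\rho M_i)\,|i\rangle\langle i|$. With $\Delta_\Phi=\Phi_M-\Phi_N$, input dimension $d=2$, Choi operator $J(\mathcal{S})=\sum_{ij}\mathcal{S}(|i\rangle\langle j|)\otimes|i\rangle\langle j|$, ME-norm $\|\mathcal{S}\|_{\mathrm{ME}}=\|J(\mathcal{S})/d\|_1$ and diamond norm $\|\mathcal{S}\|_\diamond=\max_{\rho_{AA'}}\|(\mathcal{S}\otimes I_{A'})\rho_{AA'}\|_1$, the pair is Maximal Entanglement Worst Case (MEWC) if $\|\Delta_\Phi\|_\diamond=d\|\Delta_\Phi\|_{\mathrm{ME}}$; for dichotomic qubit measurements with $M_1\neq N_1$ this is equivalent to $\det(M_0-N_0)=0$. *)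

(* Defs.v *)
From mathcomp Require Import all_boot all_order all_algebra.
From mathcomp Require Import classical_sets reals.
From mathcomp Require Export complex mxtens.
Set Implicit Arguments. Unset Strict Implicit. Unset Printing Implicit Defensive.
Import Order.TTheory GRing.Theory Num.Theory.
Local Open Scope ring_scope.
Local Open Scope classical_set_scope.
Local Open Scope complex_scope.

Section QuantumDefs.
Variable R : realType.
Local Notation C := R[i].

Definition adjmx {m n} (A : 'M[C]_(m, n)) : 'M[C]_(n, m) :=
  (map_mx (fun z : C => z^*) A)^T.

Definition unitarymx {n} (U : 'M[C]_n) : Prop := U *m adjmx U = 1%:M.

Definition psdmx {n} (A : 'M[C]_n) : Prop :=
  forall v : 'cV[C]_n, 0 <= (adjmx v *m A *m v) ord0 ord0.

Definition densitymx {n} (rho : 'M[C]_n) : Prop := psdmx rho /\ \tr rho = 1.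

Definition trace_norm {n} (X : 'M[C]_n) : R :=
  sup [set r : R | exists U : 'M[C]_n, unitarymx U /\ r%:C = `|\tr (U *m X)|].

Definition povm {k d} (M : 'I_k -> 'M[C]_d) : Prop :=
  (forall i, psdmx (M i)) /\ \sum_(i < k) M i = 1%:M.

Definition meas_channel {k d} (M : 'I_k -> 'M[C]_d) (rho : 'M[C]_d) : 'M[C]_k :=
  \sum_(i < k) \tr (rho *m M i) *: delta_mx i i.

Definition diff_channel {k d} (M N : 'I_k -> 'M[C]_d) (rho : 'M[C]_d) : 'M[C]_k :=
  meas_channel M rho - meas_channel N rho.

(* (S (x) I_{A'}) rho, with A' of the same dimension d as A; the tensor
   product uses mxtens' convention (A *t B) (i,j) (k,l) = A i k * B j l. *)
Definition ext_id {d k} (S : 'M[C]_d -> 'M[C]_k) (rho : 'M[C]_(d * d)) : 'M[C]_(k * d) :=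
  \sum_(i < d) \sum_(j < d) \sum_(a < d) \sum_(b < d)
     rho (mxtens_index (i, j)) (mxtens_index (a, b)) *: (S (delta_mx i a) *t delta_mx j b).

Definition choi {d k} (S : 'M[C]_d -> 'M[C]_k) : 'M[C]_(k * d) :=
  \sum_(i < d) \sum_(j < d) (S (delta_mx i j) *t delta_mx i j).

Definition me_norm {d k} (S : 'M[C]_d -> 'M[C]_k) : R :=
  trace_norm ((d%:R)^-1 *: choi S).

Definition diamond_norm {d k} (S : 'M[C]_d -> 'M[C]_k) : R :=
  sup [set r : R | exists rho : 'M[C]_(d * d), densitymx rho /\ r = trace_norm (ext_id S rho)].

Definition MEWC {k d} (M N : 'I_k -> 'M[C]_d) : Prop :=
  diamond_norm (diff_channel M N) = d%:R * me_norm (diff_channel M N).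

Definition mx2 (a b c e : C) : 'M[C]_2 :=
  \matrix_(i < 2, j < 2)
     if i == ord0 then (if j == ord0 then a else b) else (if j == ord0 then c else e).

Definition dich (E : 'M[C]_2) : 'I_2 -> 'M[C]_2 :=
  fun i => if i == ord0 then E else 1%:M - E.

Definition exM0 : 'M[C]_2 := mx2 (10%:R)^-1 0 0 (5%:R)^-1.
Definition exN0 : 'M[C]_2 :=
  mx2 (3%:R / 10%:R) (Num.sqrt ((10%:R)^-1 : R))%:C
      (Num.sqrt ((10%:R)^-1 : R))%:C (7%:R / 10%:R).

End QuantumDefs.

(* Main.v *)
Require Import Defs.
From mathcomp Require Import all_boot all_order all_algebra.
From mathcomp Require Import classical_sets reals complex mxtens.
From mathcomp Require Import sesquilinear spectral.
From mathcomp Require Import ring lra.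
Import Order.TTheory GRing.Theory Num.Theory.
Set Implicit Arguments. Unset Strict Implicit. Unset Printing Implicit Defensive.
Local Open Scope ring_scope.
Local Open Scope sesquilinear_scope.
Local Open Scope complex_scope.

Section Helpers.
Variable R : realType.
Local Notation C := R[i].

Lemma conjE (z : C) : conjc z = Num.conj z.
Proof.
case: z => a b.
rewrite [in RHS](_ : Complex a b = a%:C + 'i * b%:C); last first.
  by apply/eqP; rewrite eq_complex /= !(mul0r, mulr0, mul1r, subr0, addr0, add0r, eqxx).
rewrite rmorphD rmorphM /= conjCi !conj_Creal ?Creal_Re //.
- by apply/eqP; rewrite eq_complex /= !(mul0r, mulr0, mul1r, mulN1r, subr0, addr0, add0r, sub0r, oppr0, mulNr, eqxx).
- by apply/complex_realP; exists b.
- by apply/complex_realP; exists a.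
Qed.

Lemma adjE m n (A : 'M[C]_(m, n)) : adjmx A = A ^t*.
Proof. by apply/matrixP => i j; rewrite !mxE conjE. Qed.

Lemma sup_eq (E : set R) c : E c -> (forall r, E r -> r <= c) -> sup E = c.
Proof.
move=> Ec ub; apply/le_anti/andP; split.
  by apply: ge_sup; [exists c | move=> r /ub].
by apply: ub_le_sup => //; exists c => r /ub.
Qed.

Lemma unitaryE n (U : 'M[C]_n) : Defs.unitarymx U -> U ^t* *m U = 1%:M.
Proof. by rewrite /Defs.unitarymx adjE => /mulmx1C. Qed.

Lemma amgm (x y : C) : 2%:R * (`|x| * `|y|) <= `|x| ^+ 2 + `|y| ^+ 2.
Proof.
rewrite -subr_ge0.
have -> : `|x| ^+ 2 + `|y| ^+ 2 - 2%:R * (`|x| * `|y|) = (Num.norm (`|x| - `|y|)) ^+ 2.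
  by rewrite [RHS]real_normK ?rpredB ?normr_real //; ring.
exact: exprn_ge0.
Qed.

Lemma normsq n (a : 'cV[C]_n) : (a ^t* *m a) 0 0 = \sum_k `|a k 0| ^+ 2.
Proof.
rewrite !mxE; apply: eq_bigr => k _; rewrite !mxE normCK mulrC.
by [].
Qed.

Lemma quad_bound n (U : 'M[C]_n) (a : 'cV[C]_n) : Defs.unitarymx U ->
  `|(a ^t* *m (U *m a)) 0 0| <= (a ^t* *m a) 0 0.
Proof.
move=> /unitaryE HU.
set b := U *m a.
have Hb : (b ^t* *m b) 0 0 = (a ^t* *m a) 0 0.
  by rewrite /b trmx_mul map_mxM mulmxA -(mulmxA _ _ U) HU mulmx1.
rewrite !mxE.
apply: (le_trans (ler_norm_sum _ _ _)).
have H : forall k, `|(a ^t*) 0 k * b k 0| <= (`|a k 0| ^+ 2 + `|b k 0| ^+2) / 2%:R.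
  move=> k; rewrite !mxE normrM norm_conjC ler_pdivlMr ?ltr0n // mulrC.
  exact: amgm.
apply: (le_trans (ler_sum _ (fun k _ => H k))).
rewrite -mulr_suml big_split /= -!normsq Hb.
have -> : \sum_(j < n) (a ^t*) 0 j * a j 0 = (a ^t* *m a) 0 0 by rewrite mxE.
suff -> : forall z : C, (z + z) / 2 = z by [].
by move=> z; field.
Qed.


Lemma tensmxBl m n p q (A B : 'M[C]_(m, n)) (Cm : 'M[C]_(p, q)) :
  (A - B) *t Cm = A *t Cm - B *t Cm.
Proof. by apply/matrixP => i j; rewrite !mxE mulrBl. Qed.

Lemma tensmxNr m n p q (A : 'M[C]_(m, n)) (B : 'M[C]_(p, q)) :
  A *t (- B) = - (A *t B).
Proof. by apply/matrixP => i j; rewrite !mxE mulrN. Qed.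

Lemma tensmxDr m n p q (A : 'M[C]_(m, n)) (B B' : 'M[C]_(p, q)) :
  A *t (B + B') = A *t B + A *t B'.
Proof. by apply/matrixP => i j; rewrite !mxE mulrDr. Qed.

Lemma tensmxZr m n p q (A : 'M[C]_(m, n)) c (B : 'M[C]_(p, q)) :
  A *t (c *: B) = c *: (A *t B).
Proof. by apply/matrixP => i j; rewrite !mxE mulrCA. Qed.

Lemma tensmxZl m n p q (A : 'M[C]_(m, n)) c (B : 'M[C]_(p, q)) :
  (c *: A) *t B = c *: (A *t B).
Proof. by apply/matrixP => i j; rewrite !mxE mulrA. Qed.

Lemma adj_tens m n p q (A : 'M[C]_(m, n)) (B : 'M[C]_(p, q)) :
  (A *t B) ^t* = A ^t* *t B ^t*.
Proof. by rewrite trmx_tens map_mxT. Qed.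

Lemma tr_tens m n (A : 'M[C]_m) (B : 'M[C]_n) : \tr (A *t B) = \tr A * \tr B.
Proof.
rewrite /mxtrace mulr_sum; apply: eq_bigr => k _.
by rewrite !mxE.
Qed.

Lemma tens1 m n : (1%:M : 'M[C]_m) *t (1%:M : 'M[C]_n) = 1%:M.
Proof.
apply/matrixP => i j.
case: (mxtens_indexP i) => i1 i2; case: (mxtens_indexP j) => j1 j2.
rewrite tensmxE !mxE (can_eq (@mxtens_indexK m n)) xpair_eqE.
by case: (i1 == j1); case: (i2 == j2); rewrite ?mulr1 ?mulr0.
Qed.

Definition Z2 : 'M[C]_2 := delta_mx 0 0 - delta_mx 1 1.
Definition e0 : 'cV[C]_2 := delta_mx 0 0.
Definition e1 : 'cV[C]_2 := delta_mx 1 0.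

Lemma adj_delta m n (i : 'I_m) (j : 'I_n) : (delta_mx i j : 'M[C]_(m, n)) ^t* = delta_mx j i.
Proof. by rewrite trmx_delta map_delta_mx. Qed.

Lemma Z2_outer : Z2 = e0 *m e0 ^t* - e1 *m e1 ^t*.
Proof. by rewrite /e0 /e1 !adj_delta !mul_delta_mx. Qed.

Lemma Z2_adj : Z2 ^t* = Z2.
Proof. by rewrite /Z2 linearB /= map_mxB !adj_delta. Qed.

Lemma Z2_sq : Z2 *m Z2 = 1%:M.
Proof.
rewrite /Z2 mulmxBl !mulmxBr !mul_delta_mx !mul_delta_mx_0 // subr0 sub0r opprK.
apply/matrixP => i j; rewrite !mxE.
case: i => [[|[|//]] Hi]; case: j => [[|[|//]] Hj] //=; by rewrite ?mulr1n ?mulr0n ?addr0 ?add0r.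
Qed.

Lemma tr11 (A : 'M[C]_1) : \tr A = A 0 0.
Proof. by rewrite /mxtrace big_ord1. Qed.

Lemma tens_outer n (y : 'cV[C]_n) :
  Z2 *t (y *m y ^t*) = (e0 *t y) *m (e0 *t y) ^t* - (e1 *t y) *m (e1 *t y) ^t*.
Proof. by rewrite !adj_tens !tensmx_mul Z2_outer tensmxBl. Qed.

Lemma idx00 : (0 : 'I_(1 * 1)) = mxtens_index ((0 : 'I_1), (0 : 'I_1)).
Proof. by apply: val_inj. Qed.

Lemma normsq_tens n (e : 'cV[C]_2) (y : 'cV[C]_n) : (e ^t* *m e) 0 0 = 1 ->
  ((e *t y) ^t* *m (e *t y)) 0 0 = (y ^t* *m y) 0 0.
Proof.
move=> He; rewrite adj_tens tensmx_mul idx00 tensmxE He mul1r.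
by congr (_ _ _); apply: val_inj.
Qed.

Lemma e0n : (e0 ^t* *m e0) 0 0 = 1.
Proof. by rewrite /e0 adj_delta mul_delta_mx mxE. Qed.
Lemma e1n : (e1 ^t* *m e1) 0 0 = 1.
Proof. by rewrite /e1 adj_delta mul_delta_mx mxE. Qed.

Lemma tr_outer n (U : 'M[C]_n) (a : 'cV[C]_n) :
  \tr (U *m (a *m a ^t*)) = (a ^t* *m (U *m a)) 0 0.
Proof. by rewrite mulmxA mxtrace_mulC tr11. Qed.

Lemma bound_Zy n (U : 'M[C]_(2 * n)) (y : 'cV[C]_n) : Defs.unitarymx U ->
  `|\tr (U *m (Z2 *t (- (y *m y ^t*))))| <= 2%:R * (y ^t* *m y) 0 0.
Proof.
move=> HU.
rewrite tensmxNr tens_outer mulmxN mulmxBr raddfN normrN raddfB /= !tr_outer.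
apply: (le_trans (ler_normB _ _)).
rewrite mulr2n mulrDl mul1r.
apply: lerD.
  by rewrite -(normsq_tens y e0n); exact: quad_bound.
by rewrite -(normsq_tens y e1n); exact: quad_bound.
Qed.

Lemma witness n (y : 'cV[C]_n) :
  \tr ((- (Z2 *t 1%:M)) *m (Z2 *t (- (y *m y ^t*)))) = 2%:R * (y ^t* *m y) 0 0.
Proof.
rewrite tensmxNr mulNmx mulmxN opprK tensmx_mul Z2_sq mul1mx tr_tens.
rewrite mxtrace1 mxtrace_mulC tr11; congr (_ * _).
Qed.

Lemma unitary_w n : Defs.unitarymx (- (Z2 *t (1%:M : 'M[C]_n))).
Proof.
rewrite /Defs.unitarymx adjE linearN /= map_mxN mulNmx mulmxN opprK.
by rewrite adj_tens Z2_adj tensmx_mul Z2_sq trmx1 map_mx1 mulmx1 tens1.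
Qed.


Lemma qf_delta n (rho : 'M[C]_n) i j :
  ((delta_mx 0 i : 'rV[C]_n) *m rho *m (delta_mx j 0 : 'cV[C]_n)) 0 0 = rho i j.
Proof. by rewrite -rowE -colE !mxE. Qed.

Lemma qf_delta' n (rho : 'M[C]_n) i j :
  ((delta_mx 0 i : 'rV[C]_n) *m rho *m (delta_mx j 0 : 'cV[C]_n)) = (rho i j)%:M.
Proof. by apply/matrixP => a b; rewrite !ord1 qf_delta mxE eqxx mulr1n. Qed.

Lemma qf2 n (rho : 'M[C]_n) i j (c : C) :
  let v := delta_mx i 0 + c *: delta_mx j 0 : 'cV[C]_n in
  (adjmx v *m rho *m v) 0 0 =
  rho i i + c * rho i j + Num.conj c * rho j i + Num.conj c * c * rho j j.
Proof.
move=> v; rewrite adjE /v [(_ + _)^T]linearD /= [(_ *: _)^T]linearZ /= map_mxD map_mxZ !adj_delta.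
rewrite !mulmxDl !mulmxDr -!scalemxAl -!scalemxAr !qf_delta' !mxE /=.
by rewrite mulrA addrA.
Qed.


Lemma key_alg (K : comNzRingType) (rii rjj a b ca cb I : K) :
  2%:R * (cb - a) = ((rii + ca + cb + rjj) - (rii + a + b + rjj)) +
   (- I) * ((rii + (- I) * ca - (- I) * cb + rjj) - (rii + I * a - I * b + rjj)) +
   - (I ^+ 2 + 1) * (ca - cb + a - b).
Proof. ring. Qed.

Lemma herm_alg (rii rjj a b : C) :
  Num.conj (rii + a + b + rjj) = rii + a + b + rjj ->
  Num.conj (rii + 'i * a - 'i * b + rjj) = rii + 'i * a - 'i * b + rjj ->
  Num.conj rii = rii -> Num.conj rjj = rjj -> Num.conj b = a.
Proof.
move=> h1 h2 hi hj.
rewrite !rmorphD !rmorphN !rmorphM /= conjCi hi hj in h1 h2.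
have k := key_alg rii rjj a b (Num.conj a) (Num.conj b) 'i.
move: k; rewrite h1 h2 !subrr mulr0 !addr0 sqrCi addNr oppr0 mul0r add0r.
by move/eqP; rewrite mulf_eq0 pnatr_eq0 /= subr_eq0 => /eqP.
Qed.

Lemma real_ge0 (z : C) : 0 <= z -> Num.conj z = z.
Proof. by move/ger0_real/conj_Creal. Qed.

Lemma psd_herm n (rho : 'M[C]_n) : psdmx rho -> forall i j, Num.conj (rho j i) = rho i j.
Proof.
move=> Hp i j.
have r0 : forall k, Num.conj (rho k k) = rho k k.
  move=> k; apply: real_ge0.
  have := Hp (delta_mx k 0 + 0 *: delta_mx k 0); rewrite qf2.
  by rewrite rmorph0 !mul0r !addr0.
apply: (herm_alg _ _ (r0 i) (r0 j)) => //.
  apply: real_ge0.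
  have := Hp (delta_mx i 0 + 1 *: delta_mx j 0); rewrite qf2.
  by rewrite rmorph1 !mul1r.
apply: real_ge0.
have := Hp (delta_mx i 0 + 'i *: delta_mx j 0); rewrite qf2.
by rewrite conjCi !mulNr -expr2 sqrCi mulN1r opprK.
Qed.


Lemma psd_adj n (rho : 'M[C]_n) : psdmx rho -> rho ^t* = rho.
Proof. by move=> Hp; apply/matrixP => i j; rewrite !mxE psd_herm. Qed.

Lemma psd_bound n (rho : 'M[C]_n) (f : 'M[C]_n -> C) (c : C) :
  psdmx rho -> 0 <= c ->
  (forall A B, f (A + B) = f A + f B) -> (forall a A, f (a *: A) = a * f A) ->
  (forall x : 'cV[C]_n, `|f (x *m x ^t*)| <= c * (x ^t* *m x) 0 0) ->
  `|f rho| <= c * \tr rho.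
Proof.
move=> Hp c0 fD fZ fx.
have herm := psd_adj Hp.
have Hn : rho \is normalmx by apply/normalmxP; rewrite herm.
set P := spectralmx rho; set d := spectral_diag rho.
have HP : P *m P ^t* = 1%:M by apply/unitarymxP/spectral_unitarymx.
have Erho : rho = P ^t* *m diag_mx d *m P.
  by have /orthomx_spectralP E := Hn; rewrite {1}E invmx_unitary // spectral_unitarymx.
pose x k : 'cV[C]_n := (row k P) ^t*.
have dec : rho = \sum_k d 0 k *: (x k *m (x k) ^t*).
  apply/matrixP => i j; rewrite {1}Erho mul_mx_diag summxE !mxE.
  apply: eq_bigr => k _; rewrite !mxE big_ord1 !mxE conjCK.
  by rewrite [_ * d 0 k]mulrC mulrA.
have Prow : forall k, P *m x k = delta_mx k 0.
  move=> k; rewrite /x -[P in P *m _]trmxCK -map_mxM -trmx_mul.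
  by rewrite -row_mul HP rowE mulmx1 adj_delta.
have dk : forall k, d 0 k = ((x k) ^t* *m rho *m x k) 0 0.
  move=> k; rewrite {1}Erho -!mulmxA Prow !mulmxA.
  rewrite -map_mxM -trmx_mul Prow adj_delta qf_delta mxE eqxx mulr1n.
  by [].
have dk0 : forall k, 0 <= d 0 k.
  by move=> k; rewrite dk -adjE; apply: Hp.
have xk1 : forall k, ((x k) ^t* *m x k) 0 0 = 1.
  move=> k; rewrite -[RHS](_ : (1%:M : 'M[C]_n) k k = 1); last by rewrite mxE eqxx.
  rewrite -HP !mxE; apply: eq_bigr => l _; rewrite /x !mxE conjCK.
  by rewrite mulrC.
have trd : \tr rho = \sum_k d 0 k.
  by rewrite Erho mxtrace_mulC mulmxA HP mul1mx mxtrace_diag.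
have f0 : f 0 = 0 by have := fZ 0 0; rewrite scale0r mul0r.
have fsum : forall (F : 'I_n -> 'M[C]_n), f (\sum_k F k) = \sum_k f (F k).
  by move=> F; apply: (big_morph f fD f0).
rewrite {1}dec fsum trd mulr_sumr.
apply: (le_trans (ler_norm_sum _ _ _)); apply: ler_sum => k _.
rewrite fZ normrM ger0_norm // mulrC.
apply: ler_wpM2r => //.
by have := fx (x k); rewrite xk1 mulr1.
Qed.


Lemma big2 (V : nmodType) (F : 'I_2 -> V) : \sum_(i < 2) F i = F 0 + F 1.
Proof. by rewrite big_ord_recl big_ord1; congr (_ + F _); apply: val_inj. Qed.

Lemma ord2P (i : 'I_2) : i = 0 \/ i = 1.
Proof. by case: i => [[|[|//]] Hi]; [left|right]; apply: val_inj. Qed.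

Definition sq5 : R := Num.sqrt (5%:R^-1).
Definition sq2 : R := Num.sqrt (2%:R^-1).
Definition w : 'cV[C]_2 := \col_i (if i == 0 then sq5%:C else sq2%:C).
Definition Dm : 'M[C]_2 := exM0 R - exN0 R.

Lemma realC_conj (r : R) : Num.conj (r%:C) = r%:C.
Proof. by apply: conj_Creal; apply/complex_realP; exists r. Qed.

Lemma wconj i : Num.conj (w i 0) = w i 0.
Proof. by rewrite !mxE; case: ifP => _; rewrite realC_conj. Qed.

Lemma sqC (r : R) : 0 <= r -> (Num.sqrt r)%:C ^+ 2 = r%:C.
Proof. by move=> r0; rewrite -rmorphXn sqr_sqrtr. Qed.

Lemma natC n : ((n%:R : R)^-1)%:C = (n%:R : C)^-1.
Proof. by rewrite fmorphV rmorph_nat. Qed.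

Lemma sq5C : sq5%:C ^+ 2 = (5%:R : C)^-1.
Proof. by rewrite sqC ?natC // invr_ge0 ler0n. Qed.

Lemma sq2C : sq2%:C ^+ 2 = (2%:R : C)^-1.
Proof. by rewrite sqC ?natC // invr_ge0 ler0n. Qed.

Lemma sq10R : Num.sqrt ((10%:R)^-1 : R) = sq5 * sq2.
Proof.
rewrite /sq5 /sq2 -sqrtrM ?invr_ge0 ?ler0n //.
by rewrite -invfM -natrM.
Qed.

Lemma N01 : exN0 R 0 1 = sq5%:C * sq2%:C.
Proof.
rewrite /exN0 /mx2 mxE /=; apply/eqP; rewrite eq_complex /= sq10R.
by rewrite !mulr0 !mul0r subr0 addr0 !eqxx.
Qed.

Lemma N10 : exN0 R 1 0 = sq5%:C * sq2%:C.
Proof.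
rewrite /exN0 /mx2 mxE /=; apply/eqP; rewrite eq_complex /= sq10R.
by rewrite !mulr0 !mul0r subr0 addr0 !eqxx.
Qed.

Lemma Dm_ai a i : Dm a i = exM0 R a i - exN0 R a i.
Proof. by rewrite /Dm !mxE. Qed.

Lemma D_entry a i : Dm a i = - (w a 0 * w i 0).
Proof.
rewrite Dm_ai.
case: (ord2P a) => ->; case: (ord2P i) => ->.
- rewrite /w /exM0 /exN0 /mx2 !mxE /= -expr2 sq5C; by field.
- by rewrite N01 /w /exM0 /mx2 !mxE /= sub0r.
- by rewrite N10 /w /exM0 /mx2 !mxE /= sub0r mulrC.
- rewrite /w /exM0 /exN0 /mx2 !mxE /= -expr2 sq2C; by field.
Qed.

Lemma adj_entry m n (A : 'M[C]_(m, n)) i j : (A ^t*) i j = Num.conj (A j i).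
Proof. by rewrite !mxE. Qed.

Lemma wnorm : (w ^t* *m w) 0 0 = 7%:R / 10%:R.
Proof.
rewrite mxE big2 !adj_entry !wconj /w !mxE /= -!expr2 sq5C sq2C.
by field.
Qed.


Lemma diffE (A B : 'M[C]_2) (X : 'M[C]_2) :
  diff_channel (dich A) (dich B) X = \tr (X *m (A - B)) *: Z2.
Proof.
rewrite /diff_channel /meas_channel !big2 /dich /=.
rewrite !mulmxBr !mulmx1 !raddfB /=.
set t := \tr X; set a := \tr (X *m A); set b := \tr (X *m B).
apply/matrixP => i j; rewrite /Z2 !mxE; ring.
Qed.

Lemma trdelta (D : 'M[C]_2) i a : \tr (delta_mx i a *m D) = D a i.
Proof.
rewrite /mxtrace big2 !mxE !big2 !mxE.
by case: (ord2P i) => ->; case: (ord2P a) => -> /=;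
  rewrite ?mulr1n ?mulr0n ?mul1r ?mul0r ?addr0 ?add0r.
Qed.

Lemma tens_sumr m n p q (A : 'M[C]_(m, n)) I (r : seq I) (F : I -> 'M[C]_(p, q)) :
  \sum_(k <- r) (A *t F k) = A *t \sum_(k <- r) F k.
Proof.
elim: r => [|k r IH]; first by rewrite !big_nil tensmx0.
by rewrite !big_cons IH tensmxDr.
Qed.

Lemma opp_entry m n (A : 'M[C]_(m, n)) i j : (- A) i j = - A i j.
Proof. by rewrite mxE. Qed.

Lemma outer_entry m n (a : 'M[C]_(m, 1)) (b : 'M[C]_(1, n)) i j : (a *m b) i j = a i 0 * b 0 j.
Proof. by rewrite mxE big_ord1. Qed.

Definition yv (x : 'cV[C]_(2 * 2)) : 'cV[C]_2 :=
  \col_j \sum_i w i 0 * x (mxtens_index (i, j)) 0.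

Lemma ext_pure (x : 'cV[C]_(2 * 2)) :
  ext_id (diff_channel (dich (exM0 R)) (dich (exN0 R))) (x *m adjmx x) =
  Z2 *t (- (yv x *m (yv x) ^t*)).
Proof.
rewrite /ext_id.
transitivity (\sum_(i < 2) \sum_(j < 2) \sum_(a < 2) \sum_(b < 2)
  Z2 *t (((x *m adjmx x) (mxtens_index (i, j)) (mxtens_index (a, b)) * Dm a i)
         *: delta_mx j b)).
  apply: eq_bigr => i _; apply: eq_bigr => j _; apply: eq_bigr => a _; apply: eq_bigr => b _.
  by rewrite diffE trdelta tensmxZl scalerA tensmxZr.
rewrite (eq_bigr (fun i => Z2 *t \sum_(j < 2) \sum_(a < 2) \sum_(b < 2)
   (((x *m adjmx x) (mxtens_index (i, j)) (mxtens_index (a, b)) * Dm a i)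
         *: delta_mx j b))); last first.
  move=> i _; rewrite -tens_sumr; apply: eq_bigr => j _.
  rewrite -tens_sumr; apply: eq_bigr => a _.
  by rewrite -tens_sumr.
rewrite tens_sumr; congr (Z2 *t _).
rewrite [RHS]matrix_sum_delta exchange_big /=; apply: eq_bigr => j _.
rewrite (eq_bigr (fun i => \sum_(b < 2) \sum_(a < 2)
   (((x *m adjmx x) (mxtens_index (i, j)) (mxtens_index (a, b)) * Dm a i)
         *: delta_mx j b))); last by move=> i _; rewrite exchange_big.
rewrite exchange_big /=; apply: eq_bigr => b _.
under eq_bigr => i _ do rewrite -scaler_suml.
rewrite -scaler_suml; congr (_ *: _).
rewrite adjE.
have Ex : forall s t, (x *m x ^t*) s t = x s 0 * Num.conj (x t 0).
  by move=> s t; rewrite !mxE big_ord1 !mxE.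
have Ey : forall j', yv x j' 0 = \sum_i w i 0 * x (mxtens_index (i, j')) 0.
  by move=> j'; rewrite mxE.
under eq_bigr => i _ do under eq_bigr => a _ do rewrite Ex D_entry.
rewrite opp_entry outer_entry adj_entry !Ey rmorph_sum.
rewrite [X in _ * X](eq_bigr (fun a => w a 0 * Num.conj (x (mxtens_index (a, b)) 0))); last first.
  by move=> a _; rewrite rmorphM /= wconj.
rewrite mulr_suml -sumrN; apply: eq_bigr => i _.
rewrite mulr_sumr -sumrN; apply: eq_bigr => a _.
ring.
Qed.


Lemma ext_idD d k (S : 'M[C]_d -> 'M[C]_k) A B :
  ext_id S (A + B) = ext_id S A + ext_id S B.
Proof.
rewrite /ext_id -big_split; apply: eq_bigr => i _.
rewrite -big_split; apply: eq_bigr => j _.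
rewrite -big_split; apply: eq_bigr => a _.
rewrite -big_split; apply: eq_bigr => b _.
by rewrite mxE scalerDl.
Qed.

Lemma ext_idZ d k (S : 'M[C]_d -> 'M[C]_k) c A :
  ext_id S (c *: A) = c *: ext_id S A.
Proof.
rewrite /ext_id scaler_sumr; apply: eq_bigr => i _.
rewrite scaler_sumr; apply: eq_bigr => j _.
rewrite scaler_sumr; apply: eq_bigr => a _.
rewrite scaler_sumr; apply: eq_bigr => b _.
by rewrite mxE scalerA.
Qed.

Lemma sum_tens (V : nmodType) m n (F : 'I_(m * n) -> V) :
  \sum_(k < m * n) F k = \sum_(i < m) \sum_(j < n) F (mxtens_index (i, j)).
Proof.
rewrite pair_big /=.
rewrite (reindex (@mxtens_index m n)) /=; last first.
  by exists (@mxtens_unindex m n) => p _; rewrite (mxtens_indexK, mxtens_unindexK).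
by apply: eq_bigr => -[i j] _.
Qed.

Lemma lagrange (a b p q : C) : Num.conj a = a -> Num.conj b = b ->
  `|a * p + b * q| ^+ 2 + `|b * p - a * q| ^+ 2 = (a ^+ 2 + b ^+ 2) * (`|p| ^+ 2 + `|q| ^+ 2).
Proof.
move=> ha hb; rewrite !normCK rmorphD rmorphB !rmorphM /= ha hb; ring.
Qed.

Lemma w0E : w 0 0 = sq5%:C. Proof. by rewrite mxE. Qed.
Lemma w1E : w 1 0 = sq2%:C. Proof. by rewrite mxE. Qed.

Lemma ybound (x : 'cV[C]_(2 * 2)) :
  (yv x ^t* *m yv x) 0 0 <= 7%:R / 10%:R * (x ^t* *m x) 0 0.
Proof.
rewrite !normsq sum_tens exchange_big /= mulr_sumr; apply: ler_sum => j _.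
rewrite big2 mxE big2 w0E w1E.
set p := x _ 0; set q := x _ 0.
have h7 : 7%:R / 10%:R = (sq5%:C) ^+ 2 + (sq2%:C) ^+ 2 :> C.
  rewrite sq5C sq2C; by field.
rewrite h7 -(lagrange p q (realC_conj sq5) (realC_conj sq2)) lerDl.
exact: exprn_ge0.
Qed.


Lemma M00 : exM0 R 0 0 = (10%:R)^-1. Proof. by rewrite /exM0 /mx2 mxE. Qed.
Lemma M01 : exM0 R 0 1 = 0. Proof. by rewrite /exM0 /mx2 mxE. Qed.
Lemma M10 : exM0 R 1 0 = 0. Proof. by rewrite /exM0 /mx2 mxE. Qed.
Lemma M11 : exM0 R 1 1 = (5%:R)^-1. Proof. by rewrite /exM0 /mx2 mxE. Qed.
Lemma N00 : exN0 R 0 0 = 3%:R / 10%:R. Proof. by rewrite /exN0 /mx2 mxE. Qed.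
Lemma N11 : exN0 R 1 1 = 7%:R / 10%:R. Proof. by rewrite /exN0 /mx2 mxE. Qed.

Lemma mul_entry2 m n (A : 'M[C]_(m, 2)) (B : 'M[C]_(2, n)) i j : (A *m B) i j = A i 0 * B 0 j + A i 1 * B 1 j.
Proof. by rewrite mxE big2. Qed.

Lemma qf_entry2 (M : 'M[C]_2) (v : 'cV[C]_2) :
  (adjmx v *m M *m v) 0 0 =
  Num.conj (v 0 0) * M 0 0 * v 0 0 + Num.conj (v 0 0) * M 0 1 * v 1 0 +
  Num.conj (v 1 0) * M 1 0 * v 0 0 + Num.conj (v 1 0) * M 1 1 * v 1 0.
Proof.
rewrite adjE mul_entry2 !mul_entry2 !adj_entry; ring.
Qed.

Lemma psd2 (M : 'M[C]_2) (a c : C) :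
  M 0 0 = a -> M 1 1 = c -> M 1 0 = Num.conj (M 0 1) -> Num.conj a = a -> Num.conj c = c ->
  0 < a -> 0 <= a * c - M 0 1 * Num.conj (M 0 1) -> psdmx M.
Proof.
move=> h00 h11 h10 ha hc a0 det v; rewrite qf_entry2 h00 h11 h10.
set b := M 0 1; set p := v 0 0; set q := v 1 0.
have key : a * (Num.conj p * a * p + Num.conj p * b * q + Num.conj q * Num.conj b * p +
   Num.conj q * c * q) = `|a * p + b * q| ^+ 2 + (a * c - b * Num.conj b) * `|q| ^+ 2.
  rewrite !normCK rmorphD !rmorphM /= ha; ring.
rewrite -(pmulr_rge0 _ a0) key.
by apply: addr_ge0; [exact: exprn_ge0 | apply: mulr_ge0 => //; exact: exprn_ge0].
Qed.


Local Notation Dl := (diff_channel (dich (exM0 R)) (dich (exN0 R))).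

Lemma choiE : choi Dl = Z2 *t (- (w *m w ^t*)).
Proof.
rewrite /choi.
transitivity (\sum_(i < 2) \sum_(j < 2) Z2 *t (Dm j i *: delta_mx i j)).
  apply: eq_bigr => i _; apply: eq_bigr => j _.
  by rewrite diffE trdelta tensmxZl tensmxZr.
rewrite (eq_bigr (fun i => Z2 *t \sum_(j < 2) Dm j i *: delta_mx i j)); last first.
  by move=> i _; rewrite tens_sumr.
rewrite tens_sumr; congr (Z2 *t _).
rewrite [RHS]matrix_sum_delta; apply: eq_bigr => i _; apply: eq_bigr => j _.
by rewrite opp_entry outer_entry adj_entry wconj D_entry mulrC.
Qed.

Lemma ratC (a b : nat) : ((a%:R / b%:R : R))%:C = (a%:R / b%:R : C).
Proof. by rewrite rmorphM fmorphV !rmorph_nat. Qed.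

Lemma normC_real (z : C) : exists r : R, r%:C = `|z|.
Proof. by have /complex_realP [k ->] := normr_real z; exists k. Qed.

Lemma unitary1 n : Defs.unitarymx (1%:M : 'M[C]_n).
Proof. by rewrite /Defs.unitarymx adjE trmx1 map_mx1 mulmx1. Qed.

Lemma tn_val (y : 'cV[C]_2) (c s : R) : 0 <= c -> (y ^t* *m y) 0 0 = s%:C ->
  trace_norm (c%:C *: (Z2 *t (- (y *m y ^t*)))) = c * (2%:R * s).
Proof.
move=> c0 hs.
have s0 : 0 <= s by rewrite -lecR -hs normsq sumr_ge0 // => k _; exact: exprn_ge0.
have c0' : 0 <= c%:C by rewrite lecR.
rewrite /trace_norm; apply: sup_eq.
  exists (- (Z2 *t 1%:M)); split; first exact: unitary_w.
  rewrite -scalemxAr mxtraceZ witness hs normrM ger0_norm // ger0_norm.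
    by rewrite !rmorphM rmorph_nat.
  by apply: mulr_ge0; [exact: ler0n | rewrite lecR].
move=> r [U [HU Hr]].
rewrite -lecR Hr -scalemxAr mxtraceZ normrM ger0_norm // rmorphM rmorphM rmorph_nat /= -hs.
by apply: ler_wpM2l => //; exact: bound_Zy.
Qed.

Lemma me_val : me_norm Dl = 7%:R / 10%:R.
Proof.
rewrite /me_norm choiE -natC (_ : 7%:R / 10%:R = 2%:R^-1 * (2%:R * (7%:R / 10%:R))); last by field.
by apply: tn_val; [rewrite invr_ge0 ler0n | rewrite wnorm ratC].
Qed.


Lemma ext_bound (rho : 'M[C]_(2 * 2)) : densitymx rho ->
  trace_norm (ext_id Dl rho) <= 7%:R / 5%:R.
Proof.
move=> [Hp Htr]; rewrite /trace_norm; apply: ge_sup.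
  have [r Hr] := normC_real (\tr (1%:M *m ext_id Dl rho)).
  by exists r, 1%:M; split; [exact: unitary1 | ].
move=> r [U [HU Hr]].
rewrite -lecR Hr ratC.
have := @psd_bound _ rho (fun A => \tr (U *m ext_id Dl A)) (7%:R / 5%:R) Hp.
rewrite Htr mulr1; apply.
- by rewrite divr_ge0 ?ler0n.
- by move=> A B; rewrite ext_idD mulmxDr mxtraceD.
- by move=> a A; rewrite ext_idZ -scalemxAr mxtraceZ.
move=> x; rewrite -adjE ext_pure.
apply: (le_trans (bound_Zy _ HU)).
have := ybound x => hy.
have -> : 7%:R / 5%:R = 2%:R * (7%:R / 10%:R) :> C by field.
rewrite -mulrA; apply: ler_wpM2l; [exact: ler0n | by rewrite adjE].
Qed.

Definition x0 : 'cV[C]_(2 * 2) := w *t e0.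

Lemma x0E i j : x0 (mxtens_index (i, j)) 0 = w i 0 * e0 j 0.
Proof. by rewrite /x0 mxE mxtens_indexK /= !ord1. Qed.

Lemma normsq_tens2 n (y : 'cV[C]_n) (e : 'cV[C]_2) : (e ^t* *m e) 0 0 = 1 ->
  ((y *t e) ^t* *m (y *t e)) 0 0 = (y ^t* *m y) 0 0.
Proof.
move=> He; rewrite adj_tens tensmx_mul idx00 tensmxE He mulr1.
by congr (_ _ _); apply: val_inj.
Qed.

Definition rho0 : 'M[C]_(2 * 2) := ((10%:R / 7%:R : R))%:C *: (x0 *m adjmx x0).

Lemma rho0_density : densitymx rho0.
Proof.
split.
  move=> v; rewrite /rho0 -scalemxAr -scalemxAl mxE.
  rewrite mulmxA -[(_ *m adjmx x0) *m v]mulmxA outer_entry.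
  have -> : (adjmx x0 *m v) 0 0 = Num.conj ((adjmx v *m x0) 0 0).
    by rewrite !adjE -adj_entry trmx_mul map_mxM trmxCK.
  rewrite -normCK; apply: mulr_ge0; last exact: exprn_ge0.
  by rewrite lecR divr_ge0 ?ler0n.
rewrite /rho0 mxtraceZ mxtrace_mulC tr11 adjE /x0 normsq_tens2 ?e0n // wnorm ratC.
by field.
Qed.

Lemma y0E j : yv x0 j 0 = 7%:R / 10%:R * e0 j 0.
Proof.
rewrite mxE big2 !x0E !mulrA -mulrDl -!expr2 w0E w1E sq5C sq2C.
by congr (_ * _); field.
Qed.

Lemma y0norm : (yv x0 ^t* *m yv x0) 0 0 = ((49%:R / 100%:R : R))%:C.
Proof.
rewrite ratC mxE big2 !adj_entry !y0E /e0 !mxE /= !mulr0 !mulr1 addr0.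
rewrite -ratC realC_conj ratC; by field.
Qed.

Lemma ext_rho0 : ext_id Dl rho0 = ((10%:R / 7%:R : R))%:C *: (Z2 *t (- (yv x0 *m (yv x0) ^t*))).
Proof. by rewrite /rho0 ext_idZ ext_pure. Qed.

Lemma diamond_val : diamond_norm Dl = 7%:R / 5%:R.
Proof.
rewrite /diamond_norm; apply: sup_eq.
  exists rho0; split; first exact: rho0_density.
  rewrite ext_rho0 (tn_val _ y0norm); last by rewrite divr_ge0 ?ler0n.
  by field.
by move=> r [rho [Hd ->]]; exact: ext_bound.
Qed.

Lemma MEWC_ex : MEWC (dich (exM0 R)) (dich (exN0 R)).
Proof. by rewrite /MEWC diamond_val me_val; field. Qed.


Lemma oneB_entry (E : 'M[C]_2) i j : (1%:M - E) i j = (i == j)%:R - E i j.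
Proof. by rewrite !mxE. Qed.

Lemma conj_inv n : Num.conj ((n%:R : C)^-1) = (n%:R)^-1.
Proof. by rewrite fmorphV rmorph_nat. Qed.

Lemma conj_rat a b : Num.conj ((a%:R : C) / b%:R) = a%:R / b%:R.
Proof. by rewrite rmorphM /= conj_inv rmorph_nat. Qed.

Lemma pos_rat a b : (0 < a)%N -> (0 < b)%N -> 0 < (a%:R : C) / b%:R.
Proof. by move=> a0 b0; rewrite divr_gt0 ?ltr0n. Qed.

Lemma sconj : (sq5%:C * sq2%:C) * Num.conj (sq5%:C * sq2%:C) = (10%:R)^-1.
Proof.
rewrite rmorphM /= !realC_conj mulrACA -!expr2 sq5C sq2C; by field.
Qed.

Lemma psd_M0 : psdmx (exM0 R).
Proof.
apply: (@psd2 _ ((10%:R)^-1) ((5%:R)^-1)).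
- exact: M00.
- exact: M11.
- by rewrite M10 M01 rmorph0.
- exact: conj_inv.
- exact: conj_inv.
- by rewrite invr_gt0 ltr0n.
- by rewrite M01 mul0r subr0 mulr_ge0 // invr_ge0 ler0n.
Qed.

Lemma psd_1M0 : psdmx (1%:M - exM0 R).
Proof.
apply: (@psd2 _ (9%:R / 10%:R) (4%:R / 5%:R)).
- by rewrite oneB_entry M00 /=; field.
- by rewrite oneB_entry M11 /=; field.
- by rewrite !oneB_entry M10 M01 /= !subr0 (rmorph0 Num.conj).
- exact: conj_rat.
- exact: conj_rat.
- exact: pos_rat.
- rewrite oneB_entry M01 /= subr0 mul0r subr0.
  by apply: mulr_ge0; apply: ltW; exact: pos_rat.
Qed.

Lemma psd_N0 : psdmx (exN0 R).
Proof.
apply: (@psd2 _ (3%:R / 10%:R) (7%:R / 10%:R)).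
- exact: N00.
- exact: N11.
- by rewrite N10 N01 rmorphM /= !realC_conj.
- exact: conj_rat.
- exact: conj_rat.
- exact: pos_rat.
- rewrite N01 sconj (_ : _ - _ = 11%:R / 100%:R); last by field.
  by apply: ltW; exact: pos_rat.
Qed.

Lemma psd_1N0 : psdmx (1%:M - exN0 R).
Proof.
apply: (@psd2 _ (7%:R / 10%:R) (3%:R / 10%:R)).
- by rewrite oneB_entry N00 /=; field.
- by rewrite oneB_entry N11 /=; field.
- by rewrite !oneB_entry N10 N01 /= !sub0r rmorphN rmorphM /= !realC_conj.
- exact: conj_rat.
- exact: conj_rat.
- exact: pos_rat.
- rewrite oneB_entry N01 /= sub0r rmorphN mulrNN sconj.
  rewrite (_ : _ - _ = 11%:R / 100%:R); last by field.
  by apply: ltW; exact: pos_rat.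
Qed.

Lemma povm_dich (E : 'M[C]_2) : psdmx E -> psdmx (1%:M - E) -> povm (dich E).
Proof.
move=> h1 h2; split.
  by move=> i; rewrite /dich; case: ifP.
by rewrite big2 /dich /= addrC subrK.
Qed.

Lemma noncomm : exM0 R *m exN0 R != exN0 R *m exM0 R.
Proof.
apply/eqP => H.
have := congr1 (fun A : 'M[C]_2 => A 0 1) H.
rewrite /= !mul_entry2 M00 M01 M11 N00 N01 N11 mul0r addr0 mulr0 add0r mulrC => H'.
have : (sq5%:C * sq2%:C) * ((10%:R)^-1 - (5%:R)^-1) = 0 :> C.
  by rewrite mulrBr H' subrr.
rewrite (_ : (10%:R)^-1 - (5%:R)^-1 = - (10%:R)^-1 :> C); last by field.
move/eqP; rewrite !mulf_eq0 oppr_eq0 invr_eq0 pnatr_eq0 /= orbF.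
rewrite !fmorph_eq0 /sq5 /sq2 !sqrtr_eq0 !invr_le0 !lern0.
by [].
Qed.

End Helpers.


Theorem corollary7 (R : realType) :
  (exists M N : 'I_2 -> 'M[R[i]]_2,
     [/\ povm M, povm N,
         (exists i j, M i *m N j != N j *m M i) & MEWC M N]) /\
  [/\ povm (dich (exM0 R)), povm (dich (exN0 R)),
      exM0 R *m exN0 R != exN0 R *m exM0 R &
      MEWC (dich (exM0 R)) (dich (exN0 R))].
Proof.
have P1 := povm_dich (@psd_M0 R) (@psd_1M0 R).
have P2 := povm_dich (@psd_N0 R) (@psd_1N0 R).
split; last by split => //; [exact: noncomm | exact: MEWC_ex].
exists (dich (exM0 R)), (dich (exN0 R)); split => //; last exact: MEWC_ex.
by exists 0, 0; rewrite /dich /=; exact: noncomm.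
Qed.
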